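(* Consider a system with a set $\mathcal{R}$ of $n$ replicas, each with a unique identifier $\mathrm{id}(r)\in\{0,\dots,n-1\}$, a set $\mathcal{F}\subset\mathcal{R}$ of faulty replicas with $|\mathcal{F}|=f$, and $m$ instances numbered $1,\dots,m$ with $1\le m\le n-f$. Rounds are numbered $1,2,3,\dots$. Every non-faulty replica $r\in\mathcal{R}\setminus\mathcal{F}$ runs the following protocol, maintaining a set $\mathit{failed}$ and a map $\mathit{primary}:\{1,\dots,m\}\to\mathcal{R}$: - Initially $\mathit{failed}=\emptyset$ and $\mathit{primary}[i]$ is the replica with identifier $i-1$, for $1\le i\le m$. - In each round $\rho$, the replica learns a set $D_\rho\subseteq\{1,\dots,m\}$ of instances whose consensus decision in round $\rho$ was a failure. It then (1) sets $\mathit{failed}\leftarrow \mathit{failed}\cup\{\mathit{primary}[i]: i\in D_\rho\}$; and (2) for each $i\in D_\rho$ in increasing order of $i$: lets $\mathit{Im}=\{\mathit{primary}[j]:1\le j\le m\}$ (current values), chooses the replica $p\in\mathcal{R}\setminus(\mathit{failed}\cup \mathit{Im})$ with the smallest identifier, and sets $\mathit{primary}[i]\leftarrow p$. Assume: (a) all non-faulty replicas learn the same set $D_\rho$ in every round $\rho$; and (b) whenever $i\in D_\rho$, the primary of instance $i$ at the start of round $\rho$ (i.e., the common value of $\mathit{primary}[i]$ at non-faulty replicas at the start of round $\rho$, denoted $P_{i,\rho}$) is a faulty replica. For a non-faulty replica $r$ and round $\rho$, let $\mathit{failed}_\rho(r)$ and $\mathit{primary}_\rho(r)$ denote the values of these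 variables at $r$ at the start of round $\rho$. Then for every round $\rho$ and all non-faulty replicas $r,q$: 1. $\mathit{failed}_\rho(r)=\{P_{i,j}: i\in D_j,\ 1\le j<\rho\}$; 2. $\mathit{primary}_\rho(r)$ is an injective function and $\mathit{primary}_\rho(r)[i]\in\mathcal{R}\setminus\mathit{failed}_\rho(r)$ for all $1\le i\le m$; 3. $\mathit{primary}_\rho(r)=\mathit{primary}_\rho(q)$ and $\mathit{failed}_\rho(r)=\mathit{failed}_\rho(q)\subseteq\mathcal{F}$.
   Context: This models the ''unified primary replacement protocol'' for running $m$ parallel instances of a primary-backup Byzantine fault-tolerant consensus protocol: each instance has a primary replica, and in each round every instance reaches a consensus decision that is either a success or a failure (indicating primary failure), observed identically by all non-faulty replicas; instances whose decision is a failure get their primary replaced. *)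

(* Defs.v *)
From mathcomp Require Import all_boot all_order.
Set Implicit Arguments. Unset Strict Implicit. Unset Printing Implicit Defensive.

(* Replicas are 'I_n (identifier = value of the ordinal).
   Instance number k (1 <= k <= m) of the paper is the ordinal k-1 : 'I_m. *)

Section Protocol.
Variables n m : nat.

Record state := State { failed : {set 'I_n}; primary : {ffun 'I_m -> 'I_n} }.

Definition pick_min (A : {set 'I_n}) : option 'I_n :=
  if [pick p in A] is Some p0 then Some [arg min_(p < p0 in A) (val p)] else None.

Definition replace (fl : {set 'I_n}) (pr : {ffun 'I_m -> 'I_n}) (i : 'I_m)
  : {ffun 'I_m -> 'I_n} :=
  let Im := [set pr j | j : 'I_m] in
  match pick_min (~: (fl :|: Im)) with
  | Some p => [ffun j => if j == i then p else pr j]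
  | None => pr (* never happens under the hypotheses; arbitrary default *)
  end.

Definition step (D : {set 'I_m}) (s : state) : state :=
  let fl := failed s :|: [set primary s i | i in D] in
  State fl (foldl (replace fl) (primary s) [seq i <- enum 'I_m | i \in D]).

(* state after k rounds (rounds 1..k), starting from init; D k = set learned in round k.
   The state at the START of round rho is  run init D rho.-1. *)
Fixpoint run (init : state) (D : nat -> {set 'I_m}) (k : nat) : state :=
  match k with
  | 0 => init
  | k'.+1 => step (D k'.+1) (run init D k')
  end.

End Protocol.

Definition st_at n m (prim0 : {ffun 'I_m -> 'I_n}) (D : nat -> 'I_n -> {set 'I_m})
  (r : 'I_n) (rho : nat) : state n m :=
  run (State set0 prim0) (fun k => D k r) rho.-1.

(* Main.v *)
Require Import Defs.
From mathcomp Require Import all_boot all_order.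
From mathcomp Require Import zify.

Section L.
Variables n m : nat.

Lemma pick_minP (A : {set 'I_n}) p : pick_min A = Some p -> p \in A.
Proof.
rewrite /pick_min; case: pickP => [p0 Hp0|_] //= [<-].
by case: (@arg_minnP _ p0 (fun p => p \in A) (fun p : 'I_n => val p) Hp0).
Qed.

Lemma pick_min_some (A : {set 'I_n}) : A != set0 -> exists p, pick_min A = Some p.
Proof.
rewrite /pick_min; case: pickP => [p0 Hp0|H0]; first by eexists.
case/set0Pn => x; by rewrite H0.
Qed.

Variable F : {set 'I_n}.
Hypothesis hFm : #|F| + m <= n.

Lemma compl_ne (fl : {set 'I_n}) (pr : {ffun 'I_m -> 'I_n}) i :
  fl \subset F -> pr i \in F -> ~: (fl :|: [set pr j | j : 'I_m]) != set0.
Proof.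
move=> hfl hi.
have h1 : #|fl :|: [set pr j | j : 'I_m]| <= #|F :|: [set pr j | j in [set~ i]]|.
  apply: subset_leq_card; apply/subsetP => x; rewrite !inE.
  case/orP => [hx|/imsetP [j _ ->]]; first by rewrite (subsetP hfl).
  case: (eqVneq j i) => [->|hj]; first by rewrite hi.
  by apply/orP; right; apply/imsetP; exists j; rewrite // !inE.
have h2 := leq_card_setU F [set pr j | j in [set~ i]].
have h3 := leq_imset_card pr [set~ i].
rewrite cardsC1 card_ord in h3.
have h4 : #|fl :|: [set pr j | j : 'I_m]| < n.
  have : 0 < m by apply: (leq_ltn_trans (leq0n i) (ltn_ord i)).
  move=> hm0; case: h2 => h2 _.
  have h5 := leq_trans h1 (leq_trans h2 (leq_add (leqnn #|F|) h3)). lia.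
apply/negP => /eqP h0.
have := cardsC (fl :|: [set pr j | j : 'I_m]); rewrite h0 cards0 card_ord; lia.
Qed.

Lemma fold_inv (fl : {set 'I_n}) (s : seq 'I_m) (pr : {ffun 'I_m -> 'I_n}) :
  fl \subset F -> uniq s -> injective pr ->
  (forall j, j \notin s -> pr j \notin fl) -> (forall j, j \in s -> pr j \in F) ->
  injective (foldl (replace fl) pr s) /\ forall j, foldl (replace fl) pr s j \notin fl.
Proof.
move=> hfl; elim: s pr => [|i s IH] pr /= hu hinj hout hin.
  by split=> // j; apply: hout.
case/andP: hu => his hu.
have hiF : pr i \in F by apply: hin; rewrite inE eqxx.
have [p hp] := @pick_min_some _ (@compl_ne fl pr i hfl hiF : ~: (fl :|: [set pr j | j : 'I_m]) != set0).
have hpA := @pick_minP _ _ hp.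
rewrite /replace hp; apply: IH => //.
- move=> x y; rewrite !ffunE.
  move: hpA; rewrite !inE negb_or => /andP [_ hpI].
  case: (eqVneq x i) => hx; case: (eqVneq y i) => hy.
  + by rewrite hx hy.
  + by move=> E; case/negP: hpI; rewrite E imset_f.
  + by move=> E; case/negP: hpI; rewrite -E imset_f.
  + by move/hinj.
- move=> j hj; rewrite ffunE; case: (eqVneq j i) => hji.
    by move: hpA; rewrite !inE negb_or => /andP [].
  by apply: hout; rewrite inE negb_or hji.
- move=> j hj; rewrite ffunE; case: (eqVneq j i) => hji.
    by subst; rewrite hj in his.
  by apply: hin; rewrite inE hj orbT.
Qed.
End L.

Theorem proposition2
  (n f m : nat) (F : {set 'I_n}) (hF : #|F| = f)
  (hm1 : 1 <= m) (hm2 : m <= n - f)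
  (prim0 : {ffun 'I_m -> 'I_n})
  (hprim0 : forall i : 'I_m, val (prim0 i) = val i)
  (D : nat -> 'I_n -> {set 'I_m})
  (hA : forall (rho : nat) (r q : 'I_n), 0 < rho -> r \notin F -> q \notin F ->
          D rho r = D rho q)
  (hB : forall (rho : nat) (r : 'I_n) (i : 'I_m), 0 < rho -> r \notin F ->
          i \in D rho r -> primary (st_at prim0 D r rho) i \in F) :
  forall (rho : nat) (r q : 'I_n), 0 < rho -> r \notin F -> q \notin F ->
    [/\ failed (st_at prim0 D r rho)
          = \bigcup_(1 <= j < rho) [set primary (st_at prim0 D q j) i | i in D j q],
        injective (primary (st_at prim0 D r rho))
          /\ (forall i : 'I_m, primary (st_at prim0 D r rho) i \notin failed (st_at prim0 D r rho))
      & primary (st_at prim0 D r rho) = primary (st_at prim0 D q rho)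
          /\ failed (st_at prim0 D r rho) = failed (st_at prim0 D q rho)
          /\ failed (st_at prim0 D q rho) \subset F].
Proof.
have hFm : #|F| + m <= n.
  have : 0 < n - f by apply: leq_trans hm2.
  lia.
have st_eq : forall r q rho, r \notin F -> q \notin F ->
    st_at prim0 D r rho = st_at prim0 D q rho.
  move=> r q rho hr hq; rewrite /st_at; elim: (rho.-1) => //= k ->.
  by rewrite (hA k.+1 r q).
have inv : forall r k, r \notin F ->
    [/\ injective (primary (st_at prim0 D r k.+1)),
        (forall i, primary (st_at prim0 D r k.+1) i \notin failed (st_at prim0 D r k.+1))
      & failed (st_at prim0 D r k.+1) \subset F].
  move=> r k hr; elim: k => [|k [IH1 IH2 IH3]].
    rewrite /st_at /=; split.
    - by move=> x y /(congr1 val); rewrite !hprim0 => /val_inj.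
    - by move=> i; rewrite inE.
    - by apply/subsetP => x; rewrite inE.
  have hBk : forall i, i \in D k.+1 r -> primary (st_at prim0 D r k.+1) i \in F.
    by move=> i hi; apply: hB.
  move: IH1 IH2 IH3 hBk; rewrite /st_at /=.
  set s := run _ _ k => IH1 IH2 IH3 hBk.
  set fl := failed s :|: _.
  have hfl : fl \subset F.
    rewrite subUset IH3 /=; apply/subsetP => x /imsetP [i hi ->]; exact: hBk.
  have hout : forall j, j \notin [seq i <- enum 'I_m | i \in D k.+1 r] -> primary s j \notin fl.
    move=> j; rewrite mem_filter mem_enum andbT => hj.
    rewrite /fl inE negb_or IH2 /=; apply/imsetP => [[i hi /IH1 E]].
    by rewrite E hi in hj.
  have hin : forall j, j \in [seq i <- enum 'I_m | i \in D k.+1 r] -> primary s j \in F.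
    by move=> j; rewrite mem_filter mem_enum andbT; apply: hBk.
  have [H1 H2] := @fold_inv n m F hFm fl [seq i <- enum 'I_m | i \in D k.+1 r] (primary s) hfl
    (filter_uniq _ (enum_uniq _)) IH1 hout hin.
  by split.
move=> rho r q hrho hr hq.
have fform : forall k, failed (st_at prim0 D q k.+1)
    = \bigcup_(1 <= j < k.+1) [set primary (st_at prim0 D q j) i | i in D j q].
  elim=> [|k IH]; first by rewrite big_geq.
  rewrite big_nat_recr //= -IH.
  by [].
case: rho hrho => [//|k] _.
have [I1 I2 I3] := inv q k hq.
rewrite (st_eq r q _ hr hq); split => //.
Qed.
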